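(* For every integer $n>2$, the number of pairs $(s,t)\in S_n\times S_n$ such that $[s,t]=sts^{-1}t^{-1}$ is a $3$-cycle and $s$ is an $n$-cycle equals $\binom{n}{3}\, n!$.
   Context: $S_n$ is the symmetric group on $\{1,\dots,n\}$; permutations compose as functions. *)

(* Defs.v *)
From mathcomp Require Import all_boot all_fingroup.
Set Implicit Arguments. Unset Strict Implicit. Unset Printing Implicit Defensive.
Local Open Scope group_scope.

(* Permutations of 'I_n (i.e. of {1,...,n} shifted to {0,...,n-1}).
   [is_kcycle k s]: s is a k-cycle, i.e. some point x has an s-orbit of
   size k and s fixes every point outside that orbit. *)
Definition is_kcycle (n k : nat) (s : 'S_n) : bool :=
  [exists x : 'I_n, (#|porbit s x| == k) &&
    [forall y : 'I_n, (y \notin porbit s x) ==> (s y == y)]].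

(* Composition as functions: (compf s t) x = s (t x).  Note mathcomp's
   group product (s * t) x = t (s x), so compf s t = t * s. *)
Definition compf (n : nat) (s t : 'S_n) : 'S_n := t * s.

Definition commf (n : nat) (s t : 'S_n) : 'S_n :=
  compf s (compf t (compf s^-1 t^-1)).

Lemma commfE n (s t : 'S_n) x : commf s t x = s (t (s^-1 (t^-1 x))).
Proof. by rewrite /commf /compf !permM. Qed.

(* Main.v *)
Require Import Defs.
From mathcomp Require Import all_boot all_fingroup zify.
Set Implicit Arguments. Unset Strict Implicit. Unset Printing Implicit Defensive.
Local Open Scope group_scope.


Section Gen.
Variable T : finType.
Implicit Types (s u g c : {perm T}) (x y : T).

Lemma porbit_closed s x y : y \in porbit s x -> s y \in porbit s x.
Proof. by move=> /porbitP[i ->]; rewrite -permM -expgSr; exact: mem_porbit. Qed.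

Lemma porbit_sub s x (S : {set T}) :
  x \in S -> (forall y, y \in S -> s y \in S) -> porbit s x \subset S.
Proof.
move=> xS cl; apply/subsetP=> _ /porbitP[i ->]; elim: i => [|i IH].
  by rewrite expg0 perm1.
by rewrite expgSr permM; apply: cl.
Qed.

Lemma porbitJ s g x : porbit (s ^ g) (g x) = g @: porbit s x.
Proof.
have E i : ((s ^ g) ^+ i) (g x) = g ((s ^+ i) x) by rewrite -conjXg permJ.
apply/setP=> y; apply/porbitP/imsetP => [[i ->]|[z /porbitP[i ->] ->]].
  by exists ((s ^+ i) x); rewrite ?mem_porbit ?E.
by exists i; rewrite E.
Qed.

End Gen.

Section Sn.
Variable n : nat.
Implicit Types (s u g c : 'S_n) (x y : 'I_n).

Lemma kcycleJ1 k s g : is_kcycle k s -> is_kcycle k (s ^ g).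
Proof.
case/existsP=> x /andP[/eqP cx /forallP fx]; apply/existsP; exists (g x).
rewrite porbitJ card_imset ?cx ?eqxx //=; last exact: perm_inj.
apply/forallP=> y; apply/implyP=> yO.
have -> : y = g (g^-1 y) by rewrite permKV.
rewrite permJ; have := fx (g^-1 y); rewrite (_ : (g^-1 y \notin _) = true).
  by move=> /= /eqP ->.
by apply: contra yO => h; rewrite -[y](permKV g); apply: imset_f.
Qed.

Lemma kcycleJ k s g : is_kcycle k (s ^ g) = is_kcycle k s.
Proof.
apply/idP/idP; last exact: kcycleJ1.
by move=> /(kcycleJ1 g^-1); rewrite conjgK.
Qed.

Lemma kcycleV1 k s : is_kcycle k s -> is_kcycle k s^-1.
Proof.
case/existsP=> x /andP[cx /forallP fx]; apply/existsP; exists x.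
rewrite porbitV cx /=; apply/forallP=> y; apply/implyP => yO.
by move: (fx y); rewrite yO /= => /eqP {1}<-; rewrite permK.
Qed.

Lemma kcycleV k s : is_kcycle k s^-1 = is_kcycle k s.
Proof. by apply/idP/idP => /kcycleV1 //; rewrite invgK. Qed.


Lemma porbitT_card s x : (porbit s x == setT) = (#|porbit s x| == n).
Proof.
rewrite eqEcard subsetT cardsT card_ord /= eqn_leq andbC.
have -> : #|porbit s x| <= n by rewrite -[n in _ <= n]card_ord max_card.
by rewrite andbT.
Qed.

Lemma kcycle_nP s : reflect (exists x, porbit s x = setT) (is_kcycle n s).
Proof.
apply: (iffP existsP) => [[x /andP[cx _]]|[x hx]].
  by exists x; apply/eqP; rewrite porbitT_card.
exists x; rewrite -porbitT_card hx eqxx /=; apply/forallP => y.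
by rewrite inE.
Qed.

Lemma full_all s x y : porbit s x = setT -> porbit s y = setT.
Proof. by move=> h; apply/eqP; rewrite -h eq_porbit_mem h inE. Qed.

Lemma conj_fix_comm s u : (s ^ u == s) = (s * u == u * s).
Proof.
rewrite conjgE; apply/eqP/eqP => h.
  by rewrite -{2}h !mulgA mulgV mul1g.
by rewrite ?mulgA -?mulgA h mulKg.
Qed.

Lemma card_centr s : is_kcycle n s -> #|[set u : 'S_n | s ^ u == s]| = n.
Proof.
case/kcycle_nP => x hx.
have C u : u \in [set u : 'S_n | s ^ u == s] -> forall i, u ((s ^+ i) x) = (s ^+ i) (u x).
  rewrite inE conj_fix_comm => /eqP h i.
  have : commute u (s ^+ i) by apply: commuteX; apply: commute_sym.
  by rewrite /commute => h2; rewrite -!permM h2.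
rewrite -(card_in_imset (f := fun u : 'S_n => u x)).
  rewrite (_ : [set _ | _ in _] = setT) ?cardsT ?card_ord //.
  apply/setP => y; rewrite inE; apply/imsetP.
  have : y \in porbit s x by rewrite hx inE.
  case/porbitP => i ->; exists (s ^+ i) => //.
  by rewrite inE conj_fix_comm -expgS -expgSr.
move=> u v uC vC /= e; apply/permP => y.
have : y \in porbit s x by rewrite hx inE.
by case/porbitP => i ->; rewrite (C u uC) (C v vC) e.
Qed.


Definition sig0 : 'S_n := perm (can_inj (@ordSK n)).

Lemma sig0E i : sig0 i = ordS i.
Proof. by rewrite permE. Qed.

Lemma iter_sig0 (i : 'I_n) k : i + k < n -> val (iter k sig0 i) = i + k.
Proof.
elim: k => [|k IH] hk; first by rewrite addn0.
have hk2 : i + k < n by apply: leq_trans hk; rewrite addnS.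
by rewrite iterS sig0E /= IH // modn_small // -addnS.
Qed.

Lemma sig0_full (x : 'I_n) : is_kcycle n sig0.
Proof.
have n0 : 0 < n by apply: leq_ltn_trans (ltn_ord x).
pose z : 'I_n := Ordinal n0.
apply/kcycle_nP; exists z; apply/setP => y; rewrite inE.
have -> : y = (sig0 ^+ y) z.
  by apply: val_inj; rewrite permX iter_sig0 //= ltn_ord.
exact: mem_porbit.
Qed.

Lemma conj_exists s : is_kcycle n s -> exists g, sig0 ^ g = s.
Proof.
case/kcycle_nP => x hx.
have cx : #|porbit s x| = n by rewrite hx cardsT card_ord.
have U := uniq_traject_porbit s x; rewrite cx in U.
have ginj : injective (fun i : 'I_n => (s ^+ i) x).
  move=> i j /= e; apply: val_inj; apply/eqP.
  rewrite -(nth_uniq x (s := traject s x n)) ?size_traject ?ltn_ord //.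
  by rewrite !nth_traject ?ltn_ord // -!permX e.
exists (perm ginj); apply/permP => y.
have -> : y = perm ginj ((perm ginj)^-1 y) by rewrite permKV.
set i := (perm ginj)^-1 y.
rewrite permJ !permE -permM -expgSr /=.
case: (ltngtP i.+1 n) => [lt|gt|e].
- by rewrite modn_small.
- by rewrite ltnS in gt; have := ltn_ord i; rewrite ltnNge gt.
- rewrite e modnn expg0 perm1 permX.
  by have := iter_porbit s x; rewrite cx => ->.
Qed.

Lemma card_fiberC s r : is_kcycle n s -> is_kcycle n r ->
  #|[set t : 'S_n | s ^ t == r]| = n.
Proof.
move=> ks kr; have [g1 e1] := conj_exists ks; have [g2 e2] := conj_exists kr.
pose t0 := g1^-1 * g2.
have Er : s ^ t0 = r by rewrite -e1 -conjgM mulKVg.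
rewrite -[RHS](card_centr ks) -[in RHS](card_imset _ (mulIg t0)).
apply: eq_card => t; rewrite inE; apply/idP/imsetP.
  move/eqP=> st; exists (t * t0^-1); last by rewrite mulgKV.
  by rewrite inE conjgM st -Er conjgK.
by case=> u; rewrite inE => /eqP uC ->; apply/eqP; rewrite conjgM uC.
Qed.

End Sn.

Lemma card_fiber (A B : finType) (P : pred A) (f : A -> B) (Q : pred B) :
  (forall a, P a -> Q (f a)) ->
  #|[set a | P a]| = \sum_(b | Q b) #|[set a | P a && (f a == b)]|.
Proof.
move=> PQ; rewrite -sum1dep_card (partition_big f Q) //.
by apply: eq_bigr => b _; rewrite sum1dep_card.
Qed.


Section C3.
Variable n : nat.
Implicit Types (s u g c : 'S_n) (x y a b d : 'I_n).

Definition cyc3 a b d : 'S_n := tperm a b * tperm a d.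

Section Dist.
Variables (a b d : 'I_n) (hab : a != b) (hbd : b != d) (hda : d != a).

Lemma cyc3a : cyc3 a b d a = b.
Proof using hab hbd hda. by rewrite permM tpermL tpermD // eq_sym. Qed.
Lemma cyc3b : cyc3 a b d b = d.
Proof using hab hbd hda. by rewrite permM tpermR tpermL. Qed.
Lemma cyc3d : cyc3 a b d d = a.
Proof using hab hbd hda. have had : a != d by rewrite eq_sym.
by rewrite permM [tperm a b d]tpermD // tpermR. Qed.
Lemma cyc3o y : y != a -> y != b -> y != d -> cyc3 a b d y = y.
Proof using hab hbd hda. by move=> ya yb yd; rewrite permM !tpermD // eq_sym. Qed.

Lemma cyc3_moved y : cyc3 a b d y != y -> [|| y == a, y == b | y == d].
Proof using hab hbd hda.
by apply: contraR; rewrite !negb_or => /and3P[ya yb yd]; rewrite cyc3o.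
Qed.

Lemma cyc3_k3 : is_kcycle 3 (cyc3 a b d).
Proof using hab hbd hda.
apply/existsP; exists a.
have E : porbit (cyc3 a b d) a =i [:: a; b; d].
  move=> y; apply/idP/idP.
    move=> yO; have: y \in [set z | z \in [:: a; b; d]]; last by rewrite inE.
    apply: (subsetP (porbit_sub _ _)) yO; first by rewrite !inE eqxx.
    move=> z; rewrite !inE => /or3P[] /eqP ->; by rewrite ?cyc3a ?cyc3b ?cyc3d eqxx ?orbT.
  rewrite !inE => /or3P[] /eqP ->; first exact: porbit_id.
    by have := mem_porbit (cyc3 a b d) 1 a; rewrite expg1 cyc3a.
  by have := mem_porbit (cyc3 a b d) 2 a; rewrite expgS expg1 permM cyc3a cyc3b.
rewrite (eq_card E) (card_uniqP _) /=; last by rewrite !inE negb_or hab hbd andbT eq_sym hda.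
apply/forallP => y; apply/implyP; rewrite E !inE !negb_or => /and3P[ya yb yd].
by rewrite cyc3o.
Qed.
End Dist.

Lemma C3_struct c x : is_kcycle 3 c -> c x != x ->
  [/\ x != c x, c x != c (c x), c (c x) != x & c = cyc3 x (c x) (c (c x))].
Proof.
case/existsP => x0 /andP[/eqP c3 /forallP f0] cx.
have xO : x \in porbit c x0.
  by apply/negPn/negP => h; move: (implyP (f0 x) h); rewrite (negbTE cx).
have eqO : porbit c x = porbit c x0 by apply/eqP; rewrite eq_porbit_mem.
have c3x : #|porbit c x| = 3 by rewrite eqO.
have U := uniq_traject_porbit c x; rewrite c3x /= in U.
have I3 := iter_porbit c x; rewrite c3x /= in I3.
move: U; rewrite !inE !negb_or => /and3P[/andP[h1 h2] h3 _].
have h2' : c (c x) != x by rewrite eq_sym.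
split => //; apply/permP => y; case: (boolP (y \in porbit c x)) => yO.
  rewrite porbit_traject c3x !inE in yO; case/or3P: yO => /eqP ->.
  - by rewrite cyc3a.
  - by rewrite cyc3b.
  - by rewrite cyc3d.
have := f0 y; rewrite -eqO yO /= => /eqP ->.
rewrite porbit_traject c3x !inE !negb_or in yO; case/and3P: yO => ya yb yd.
by rewrite cyc3o.
Qed.
End C3.

Arguments sig0 {n}.
Ltac slia := simpl in *; lia.


Section Orient.
Variable n : nat.
Implicit Types (r c : 'S_n) (x y a b d : 'I_n).

Lemma sig0_val (k : 'I_n) : k.+1 < n -> val (sig0 k) = k.+1.
Proof. by move=> h; rewrite sig0E /= modn_small. Qed.

Lemma interval_in r x (y : 'I_n) (j : nat) : y \in porbit r x ->
  (forall k : 'I_n, y <= k < j -> val (r k) = k.+1) ->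
  forall k : 'I_n, y <= k <= j -> k \in porbit r x.
Proof.
move=> yO H.
suff S m : forall k : 'I_n, val k = y + m -> k <= j -> k \in porbit r x.
  move=> k /andP[h1 h2]; apply: (S (k - y)) => //; slia.
elim: m => [|m IH] k hk kj.
  by have -> : k = y by apply: val_inj; rewrite /= hk addn0.
have hk' : y + m < n by have := ltn_ord k; slia.
pose k' := Ordinal hk'.
have -> : k = r k' by apply: val_inj; rewrite /= H /=; slia.
by apply: porbit_closed; apply: IH => /=; slia.
Qed.

Lemma good_orient a b d : a < b -> b < d -> is_kcycle n (sig0 * cyc3 a b d).
Proof.
move=> hab hbd.
have nd : d < n := ltn_ord d.
have dab : a != b by rewrite -val_eqE /=; slia.
have dbd : b != d by rewrite -val_eqE /=; slia.
have dda : d != a by rewrite -val_eqE /=; slia.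
set r := sig0 * cyc3 a b d.
have R (k : 'I_n) : k.+1 < n -> k.+1 != a -> k.+1 != b -> k.+1 != d -> val (r k) = k.+1.
  move=> h1 h2 h3 h4; rewrite permM cyc3o ?sig0_val // -val_eqE /= sig0_val //.
apply/kcycle_nP; exists b; set O := porbit r b.
have S1 := interval_in (porbit_id r b) (j := d.-1).
have S1' : forall k : 'I_n, b <= k <= d.-1 -> k \in O.
  apply: S1 => k hk; apply: R; slia.
have hd1 : d.-1 < n by slia.
have aO : a \in O.
  have -> : a = r (Ordinal hd1).
    rewrite permM (_ : sig0 _ = d) ?cyc3d //; apply: val_inj; rewrite sig0_val /=; slia.
  by apply: porbit_closed; apply: S1' => /=; slia.
have S2 : forall k : 'I_n, a <= k <= b.-1 -> k \in O.
  apply: (interval_in aO) => k hk; apply: R; slia.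
have hb1 : b.-1 < n by slia.
have dO : d \in O.
  have -> : d = r (Ordinal hb1).
    rewrite permM (_ : sig0 _ = b) ?cyc3b //; apply: val_inj; rewrite sig0_val /=; slia.
  by apply: porbit_closed; apply: S2 => /=; slia.
have S3 : forall k : 'I_n, d <= k <= n.-1 -> k \in O.
  apply: (interval_in dO) => k hk; apply: R; slia.
have hn1 : n.-1 < n by slia.
have hz : 0 < n by slia.
have zO : Ordinal hz \in O.
  case: (eqVneq (val a) 0) => a0.
    by have -> : Ordinal hz = a by apply: val_inj; rewrite /= a0.
  have -> : Ordinal hz = r (Ordinal hn1).
    rewrite permM (_ : sig0 _ = Ordinal hz).
      rewrite cyc3o // -val_eqE /=; slia.
    by apply: val_inj; rewrite sig0E /= prednK ?modnn.
  by apply: porbit_closed; apply: S3 => /=; slia.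
have S4 : forall k : 'I_n, 0 <= k <= a.-1 -> k \in O.
  apply: (interval_in zO) => k hk; apply: R; slia.
apply/setP => k; rewrite inE; have := ltn_ord k => kn.
case: (ltnP k a) => ka; first by apply: S4; slia.
case: (ltnP k b) => kb; first by apply: S2; slia.
case: (ltnP k d) => kd; first by apply: S1'; slia.
by apply: S3; slia.
Qed.

Lemma bad_orient a b d : a < d -> d < b -> ~~ is_kcycle n (sig0 * cyc3 a b d).
Proof.
move=> had hdb.
have nb : b < n := ltn_ord b.
have dab : a != b by rewrite -val_eqE /=; slia.
have dbd : b != d by rewrite -val_eqE /=; slia.
have dda : d != a by rewrite -val_eqE /=; slia.
set r := sig0 * cyc3 a b d.
apply/negP => /kcycle_nP [x hx]; have hA := full_all a hx.
have sub : porbit r a \subset [set k : 'I_n | a <= k < b].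
  apply: porbit_sub => [|k]; first by rewrite inE leqnn /=; slia.
  rewrite !inE => /andP[h1 h2]; rewrite permM.
  have vz : val (sig0 k) = k.+1 by rewrite sig0_val //; slia.
  case: (eqVneq (sig0 k) b) => zb; first by rewrite zb cyc3b; slia.
  case: (eqVneq (sig0 k) d) => zd; first by rewrite zd cyc3d; slia.
  have za : sig0 k != a by rewrite -val_eqE vz; slia.
  rewrite cyc3o // vz; move: zb; rewrite -val_eqE vz => zb; slia.
have := subsetP sub b; rewrite hA inE => /(_ isT); rewrite inE; slia.
Qed.

End Orient.


Section Count.
Variable n : nat.

Definition f3 (t : 3.-tuple 'I_n) : 'S_n :=
  if val t is [:: a; b; d] then cyc3 a b d else 1.

Lemma tuple3P (t : 3.-tuple 'I_n) : exists a b d, val t = [:: a; b; d].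
Proof. case: t => s sz /=; move: sz; case: s => [|a [|b [|d [|? ?]]]] // _; by exists a, b, d. Qed.

Lemma dist_of (a b d : 'I_n) : a < b -> b < d -> [/\ a != b, b != d & d != a].
Proof. by move=> h1 h2; split; rewrite -val_eqE /=; slia. Qed.

Lemma K0 : #|[set c : 'S_n | is_kcycle 3 c && is_kcycle n (sig0 * c)]| = 'C(n, 3).
Proof.
rewrite -card_ltn_sorted_tuples -(card_in_imset (f := f3)).
  apply: eq_card => c; rewrite inE; apply/idP/imsetP.
    case/andP => k3 kn.
    have [x0 cx0] : exists x0, c x0 != x0.
      case/existsP: (k3) => x0 /andP[/eqP c3 _]; exists x0; apply/negP => /eqP e.
      have : porbit c x0 \subset [set x0].
        by apply: porbit_sub; rewrite ?inE // => y; rewrite inE => /eqP ->; rewrite e inE.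
      by move/subset_leq_card; rewrite cards1 c3.
    have [a ca amin] := @arg_minnP _ x0 (fun i => c i != i) (fun i => nat_of_ord i) cx0.
    have [h1 h2 h3 ceq] := C3_struct k3 ca.
    have ccc : c (c (c a)) = a by have := cyc3d h1 h2 h3; rewrite -ceq.
    have ab : a < c a.
      have := amin (c a); rewrite eq_sym => /(_ h2).
      by move: h1; rewrite -val_eqE /= => ?; slia.
    have ad : a < c (c a).
      have := amin (c (c a)); rewrite ccc eq_sym => /(_ h3).
      by move: h3; rewrite -val_eqE /= => ?; slia.
    case: (ltngtP (c a) (c (c a))) => [bd|db|e].
    - exists [tuple a; c a; c (c a)]; last by rewrite /f3 /= -ceq.
      by rewrite inE /= ab bd.
    - by move: kn; rewrite ceq (negbTE (bad_orient ad db)).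
    - by move: h2; rewrite -val_eqE /= e eqxx.
  case=> t; rewrite inE => ts ->.
  have [a [b [d e]]] := tuple3P t; rewrite /f3 e.
  rewrite e /= andbT in ts; case/andP: ts => ab bd.
  have [d1 d2 d3] := dist_of ab bd.
  by rewrite cyc3_k3 // good_orient.
move=> t1 t2; rewrite !inE => s1 s2.
have [a [b [d e1]]] := tuple3P t1; have [a' [b' [d' e2]]] := tuple3P t2.
rewrite /f3 e1 e2 => E; apply: val_inj; rewrite e1 e2.
rewrite e1 /= andbT in s1; case/andP: s1 => ab bd.
rewrite e2 /= andbT in s2; case/andP: s2 => ab' bd'.
have [d1 d2 d3] := dist_of ab bd; have [d1' d2' d3'] := dist_of ab' bd'.
have m1 : cyc3 a b d a' != a' by rewrite E cyc3a // eq_sym.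
have m2 : cyc3 a' b' d' a != a by rewrite -E cyc3a // eq_sym.
have l1 := cyc3_moved d1 d2 d3 m1; have l2 := cyc3_moved d1' d2' d3' m2.
have aa : a = a'.
  apply: val_inj; apply/eqP; rewrite eqn_leq; apply/andP; split.
    by case/or3P: l1 => /eqP ->; slia.
  by case/or3P: l2 => /eqP ->; slia.
subst a'.
have bb : b = b' by rewrite -(cyc3a d1 d2 d3) E cyc3a.
subst b'.
have dd : d = d' by rewrite -(cyc3b d1 d2 d3) E cyc3b.
by subst d'.
Qed.

End Count.


Lemma sumc (T : finType) (P : pred T) c :
  \sum_(i | P i) c = (#|[set i | P i]| * c)%N.
Proof. rewrite -sum1dep_card big_distrl; apply: eq_bigr => i _ /=; exact: esym (mul1n c). Qed.

Section Main.
Variable n : nat.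
Implicit Types (s r t g c : 'S_n).

Lemma card_conj (P : pred 'S_n) g : #|[set c | P (c ^ g)]| = #|[set c | P c]|.
Proof.
rewrite -[RHS](card_imset _ (conjg_inj g^-1)); apply: eq_card => c; rewrite inE.
apply/idP/imsetP => [Pc|[d dP ->]]; last by rewrite inE conjgKV in dP *.
by exists (c ^ g); rewrite ?inE ?conjgK.
Qed.

Lemma card_mul (P : pred 'S_n) s : #|[set c | P (s * c)]| = #|[set c | P c]|.
Proof.
rewrite -[RHS](card_imset _ (mulgI s^-1)); apply: eq_card => c; rewrite inE.
apply/idP/imsetP => [Pc|[d dP ->]]; last by rewrite inE mulKVg in dP *.
by exists (s * c); rewrite ?inE ?mulKg.
Qed.

Lemma commfJ s t : commf s t = (s ^ t)^-1 * s.
Proof. by rewrite /commf /compf -conjVg conjgE !mulgA. Qed.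

Lemma card_N (x0 : 'I_n) : (#|[set s : 'S_n | is_kcycle n s]| * n)%N = n`!.
Proof.
have k0 := sig0_full x0.
rewrite -card_Sn -cardsT (_ : [set: 'S_n] = [set t : 'S_n | true]); last first.
  by apply/setP => t; rewrite !inE.
rewrite [RHS](@card_fiber _ _ _ (fun t => sig0 ^ t) (fun r => is_kcycle n r)); last first.
  by move=> t _; rewrite kcycleJ.
rewrite (eq_bigr (fun _ => n)) ?sumc // => r kr.
by rewrite -[RHS](card_fiberC k0 kr); apply: eq_card => t; rewrite !inE.
Qed.

Lemma Ks s : is_kcycle n s ->
  #|[set c | is_kcycle 3 c && is_kcycle n (s * c)]| = 'C(n, 3).
Proof.
move=> ks; have [g eg] := conj_exists ks.
rewrite -(K0 n) -(card_conj _ g); apply: eq_card => c; rewrite !inE.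
by rewrite kcycleJ -eg -conjMg kcycleJ.
Qed.

Lemma per_s s : is_kcycle n s ->
  #|[set t : 'S_n | is_kcycle 3 (commf s t)]| = ('C(n, 3) * n)%N.
Proof.
move=> ks.
rewrite (@card_fiber _ _ _ (fun t => s ^ t) (fun r => is_kcycle n r)); last first.
  by move=> t _; rewrite kcycleJ.
rewrite (eq_bigr (fun r => if is_kcycle 3 (r^-1 * s) then n else 0)); last first.
  move=> r kr; case: ifP => h.
    rewrite -[RHS](card_fiberC ks kr); apply: eq_card => t; rewrite !inE.
    by case: (eqVneq (s ^ t) r) => [e|]; rewrite ?andbF ?andbT // commfJ e h.
  apply/eqP; rewrite cards_eq0; apply/eqP/setP => t; rewrite !inE.
  by case: (eqVneq (s ^ t) r) => [e|]; rewrite ?andbF ?andbT // commfJ e h.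
rewrite -big_mkcondr sumc; congr (_ * _)%N.
rewrite -(Ks ks) -(card_mul _ s); apply: eq_card => c; rewrite !inE.
by rewrite invMg -mulgA mulVg mulg1 kcycleV andbC.
Qed.

End Main.

Local Close Scope group_scope.


Theorem mainTheorem2 (n : nat) (hn : 2 < n) :
  #|[set st : 'S_n * 'S_n |
       is_kcycle 3 (commf st.1 st.2) && is_kcycle n st.1 ]|
  = 'C(n, 3) * n`!.
Proof.
have n0 : 0 < n by apply: leq_trans hn.
pose x0 : 'I_n := Ordinal n0.
rewrite (@card_fiber _ _ _ (fun st => st.1) (fun s => is_kcycle n s)); last first.
  by move=> st /andP[].
rewrite (eq_bigr (fun _ => 'C(n, 3) * n)); last first.
  move=> s ks; rewrite -(per_s ks).
  have inj : injective (fun t : 'S_n => (s, t)) by move=> ? ? [].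
  rewrite -[RHS](card_imset _ inj); apply: eq_card => -[a b]; rewrite !inE /=.
  apply/idP/imsetP.
    case/andP => /andP[h _] /eqP ea; exists b; rewrite ?inE -?ea //.
  by case=> t; rewrite inE => h [-> ->]; rewrite h ks eqxx.
by rewrite sumc -(card_N x0) mulnCA mulnC.
Qed.
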